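(* Consider a network of $C$ devices of which a set $\mathcal{K}$ of $K\le C$ devices act as data aggregators, each aggregator $k$ producing a prediction $\Psi_k(X;\theta,\mathcal{G}(t))\in\mathcal{Y}$ (a probability vector over classes) for input $X$. Under the device fault dynamic network $\mathcal{G}_r(t)$ with fault rate $r\in[0,1]$ (each device is present independently with probability $1-r$), the active set $\mathcal{A}$ consists of the aggregators present at the final round, so $\Pr(|\mathcal{A}|=0)=r^K$. Let $h=h_{\mathrm{rand}}$ be the post-processing that outputs the prediction of a uniformly random active aggregator, and outputs the marginal label distribution $p(Y)$ if $\mathcal{A}=\emptyset$. Define the dynamic risk $R_h(\theta;\mathcal{G})=\mathbb{E}_{X,Y,\mathcal{G},h}[\ell(h(\Psi(X;\theta,\mathcal{G})),Y)]$ for a loss $\ell$. Assume that the risk of each aggregator's predictor with faults is at least its risk without faults (i.e., on the fault-free base graph $\mathcal{G}_{\mathrm{base}}$). Then $$R_h(\theta;\mathcal{G}_r(t))\;\ge\;(1-r^K)\,R_h(\theta;\mathcal{G}_{\mathrm{base}})\;+\;r^K\,\mathbb{E}\big[\ell(Y,p(Y))\big],$$ where $\mathbb{E}[\ell(Y,p(Y))]$ is the risk of the random predictor that outputs the marginal label distribution.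
   Context: Data: $(X,Y)\sim p(X,Y)$, features split across devices. The dynamic network $\mathcal{G}(t)=(\mathcal{C}(t),\mathcal{E}(t))$ changes over discrete communication rounds $t$; in the device fault dynamic network with base topology $\mathcal{G}_{\mathrm{base}}=(\mathcal{C}_{\mathrm{base}},\mathcal{E}_{\mathrm{base}})$, each device $c\in\mathcal{C}_{\mathrm{base}}$ is in $\mathcal{C}_r(t)$ with probability $1-r$ and $\mathcal{E}_r(t)$ consists of base edges between present devices. The active set at the final round $T$ is the set of aggregators able to communicate their prediction to the external entity collecting the final output. The risk with $h_{\mathrm{rand}}$ on $\mathcal{G}_{\mathrm{base}}$ equals the average over aggregators of their individual fault-free risks. *)

(* Defs.v *)
From HB Require Import structures.
From mathcomp Require Import all_boot all_order all_algebra.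
From mathcomp Require Import all_classical all_reals all_analysis.
Set Implicit Arguments. Unset Strict Implicit. Unset Printing Implicit Defensive.
Import Order.TTheory GRing.Theory Num.Theory.
Local Open Scope classical_set_scope.
Local Open Scope ring_scope.

(* A graph on the devices 'I_C: set of present devices and edge relation. *)
Definition graph (C : nat) := ({set 'I_C} * rel 'I_C)%type.

(* A realization of the device fault dynamic network over rounds 0..T:
   for each round t, the set C_r(t) of present devices. *)
Definition traj (T C : nat) := {ffun 'I_T.+1 -> {set 'I_C}}.

Definition net_of (T C : nat) (E : rel 'I_C) (g : traj T C) : 'I_T.+1 -> graph C :=
  fun t => (g t, fun a b => [&& E a b, a \in g t & b \in g t]).

Definition active (T C : nat) (Kset : {set 'I_C}) (g : traj T C) : {set 'I_C} :=
  g ord_max :&: Kset.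

Definition fault_prob {R : realType} (T C : nat) (r : R) (g : traj T C) : R :=
  \prod_(t < T.+1) \prod_(c < C) (if c \in g t then 1 - r else r).

Definition base_traj (T C : nat) : traj T C := [ffun _ => (finset.setTfor 'I_C)].

Definition base_prob {R : realType} (T C : nat) (g : traj T C) : R :=
  (g == base_traj T C)%:R.

Definition marginal_Y {d} {Om : measurableType d} {R : realType}
  (P : probability Om R) (n : nat) (Y : Om -> 'I_n) : {ffun 'I_n -> R} :=
  [ffun y => fine (P (Y @^-1` [set y]))].

(* Loss of h_rand, averaged over its internal randomness (uniform choice of
   an active aggregator); outputs p(Y) if no aggregator is active. *)
Definition h_rand_loss {R : realType} (C n : nat) {TX : Type}
  (loss : {ffun 'I_n -> R} -> 'I_n -> R) (pY : {ffun 'I_n -> R})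
  (Psik : 'I_C -> TX -> {ffun 'I_n -> R}) (A : {set 'I_C}) (x : TX) (y : 'I_n) : R :=
  if A == finset.set0 then loss pY y
  else (#|A|%:R)^-1 * \sum_(k in A) loss (Psik k x) y.

(* Dynamic risk R_h(theta; G) = E_{G} E_{X,Y} E_h [loss(h(Psi(X;theta,G)),Y)],
   where the network distribution is given by weights w on realizations
   (independent of the data). *)
Definition dynamic_risk {d} {Om : measurableType d} {R : realType}
  (P : probability Om R) {TX : Type} (X : Om -> TX) (n : nat) (Y : Om -> 'I_n)
  {Theta : Type} (theta : Theta) (C T : nat) (E : rel 'I_C) (Kset : {set 'I_C})
  (Psi : Theta -> 'I_C -> ('I_T.+1 -> graph C) -> TX -> {ffun 'I_n -> R})
  (loss : {ffun 'I_n -> R} -> 'I_n -> R) (w : traj T C -> R) : \bar R :=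
  (\sum_(g : traj T C)
     (w g)%:E * \int[P]_om
        (h_rand_loss loss (marginal_Y P Y) (fun k => Psi theta k (net_of E g))
           (active Kset g) (X om) (Y om))%:E)%E.

Definition agg_risk {d} {Om : measurableType d} {R : realType}
  (P : probability Om R) {TX : Type} (X : Om -> TX) (n : nat) (Y : Om -> 'I_n)
  {Theta : Type} (theta : Theta) (C T : nat) (E : rel 'I_C)
  (Psi : Theta -> 'I_C -> ('I_T.+1 -> graph C) -> TX -> {ffun 'I_n -> R})
  (loss : {ffun 'I_n -> R} -> 'I_n -> R) (k : 'I_C) (g : traj T C) : \bar R :=
  \int[P]_om (loss (Psi theta k (net_of E g) (X om)) (Y om))%:E.

(* Main.v *)
Require Import Defs.
From HB Require Import structures.
From mathcomp Require Import all_boot all_order all_algebra.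
From mathcomp Require Import all_classical all_reals all_analysis.
From mathcomp Require Import fingroup perm.
Import Order.TTheory GRing.Theory Num.Theory.
Local Open Scope ring_scope.

Lemma sum_sets (R : comNzRingType) (I : finType) (x y : I -> R) :
  \sum_(S : {set I}) \prod_c (if c \in S then x c else y c) = \prod_c (x c + y c).
Proof.
have -> : \prod_c (x c + y c) = \prod_c \sum_(b : bool) (if b then x c else y c).
  by apply: eq_bigr => c _; rewrite big_bool /= addrC.
rewrite bigA_distr_bigA /=.
rewrite (reindex (fun S : {set I} => [ffun c => c \in S])) /=.
  by apply: eq_bigr => S _; apply: eq_bigr => c _; rewrite ffunE.
exists (fun f : {ffun I -> bool} => [set c | f c]) => [S _|f _].
  by apply/setP => c; rewrite inE ffunE.
by apply/ffunP => c; rewrite ffunE inE.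
Qed.

Lemma sum_trajs (R : comNzRingType) (T C : nat) (x y : 'I_T.+1 -> 'I_C -> R) :
  \sum_(g : traj T C) \prod_t \prod_c (if c \in g t then x t c else y t c)
  = \prod_t \prod_c (x t c + y t c).
Proof.
transitivity (\prod_t \sum_(S : {set 'I_C}) \prod_c (if c \in S then x t c else y t c)).
  by rewrite bigA_distr_bigA.
by apply: eq_bigr => t _; rewrite sum_sets.
Qed.

Section W.
Variables (R : realType) (T C : nat) (r : R) (Kset : {set 'I_C}).
Hypothesis (r0 : 0 <= r) (r1 : r <= 1).

Lemma w_ge0 (g : traj T C) : 0 <= fault_prob r g :> R.
Proof.
apply: prodr_ge0 => t _; apply: prodr_ge0 => c _; case: ifP => _ //.
by rewrite subr_ge0.
Qed.

Lemma w_sum1 : \sum_(g : traj T C) fault_prob r g = 1.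
Proof.
rewrite /fault_prob (@sum_trajs _ T C (fun _ _ => 1 - r) (fun _ _ => r)).
by rewrite big1 // => t _; rewrite big1 // => c _; rewrite subrK.
Qed.

Lemma w_empty :
  \sum_(g : traj T C) fault_prob r g * (active Kset g == finset.set0)%:R = r ^+ #|Kset|.
Proof.
pose x := fun (t : 'I_T.+1) (c : 'I_C) => (1 - r) * ((t != ord_max) || (c \notin Kset))%:R.
transitivity (\sum_(g : traj T C) \prod_t \prod_c (if c \in g t then x t c else r)).
  apply: eq_bigr => g _; rewrite /fault_prob /active.
  case: eqP => [H0|/eqP H0].
    rewrite mulr1; apply: eq_bigr => t _; apply: eq_bigr => c _.
    case: ifP => // cg; rewrite /x.
    case: (t =P ord_max) => [et|/eqP tn]; last by rewrite /= mulr1.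
    case cK: (c \in Kset); last by rewrite /= mulr1.
    by move/setP: H0 => /(_ c); rewrite !inE -et cg cK.
  rewrite mulr0; case/set0Pn: H0 => c; rewrite inE => /andP [cg cK].
  rewrite (bigD1 ord_max) //= (bigD1 c) //= cg /x eqxx cK /= !mulr0 mul0r.
  by rewrite mul0r.
rewrite sum_trajs (bigD1 ord_max) //= [X in _ * X]big1 ?mulr1; last first.
  move=> t tn; rewrite big1 // => c _; rewrite /x tn /= mulr1 subrK //.
rewrite /x eqxx /= -prodr_const [RHS]big_mkcond /=; apply: eq_bigr => c _.
by case: (c \in Kset) => /=; rewrite ?mulr0 ?add0r ?mulr1 ?subrK.
Qed.

End W.

Definition phi {R : realType} {C T : nat} (Kset : {set 'I_C}) (k : 'I_C) (g : traj T C) : R :=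
  (k \in active Kset g)%:R / (#|active Kset g|%:R).

Lemma mem_imset_tperm (C : nat) (k k' c : 'I_C) (S : {set 'I_C}) :
  (c \in [set tperm k k' x | x in S]) = (tperm k k' c \in S).
Proof.
apply/imsetP/idP => [[x xS ->]|cS]; first by rewrite tpermK.
by exists (tperm k k' c) => //; rewrite tpermK.
Qed.

Section Sym.
Variables (R : realType) (T C : nat) (r : R) (Kset : {set 'I_C}).

Lemma c_sym k k' : k \in Kset -> k' \in Kset ->
  \sum_(g : traj T C) fault_prob r g * phi Kset k g
  = \sum_(g : traj T C) fault_prob r g * phi Kset k' g.
Proof.
move=> kK k'K.
pose s := tperm k k'.
pose sw := fun g : traj T C => [ffun t => [set s x | x in g t]] : traj T C.
have swK : involutive sw.
  move=> g; apply/ffunP => t; rewrite !ffunE; apply/setP => c.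
  by rewrite !mem_imset_tperm tpermK.
rewrite (reindex_inj (inv_inj swK)); apply: eq_bigr => g _.
have sK c : (s c \in Kset) = (c \in Kset).
  by rewrite /s; case: tpermP => [->|->|]; rewrite ?kK ?k'K.
have Asw : active Kset (sw g) = [set s x | x in active Kset g].
  apply/setP => c; rewrite mem_imset_tperm !inE ffunE mem_imset_tperm.
  by rewrite sK.
congr (_ * _).
  rewrite /fault_prob; apply: eq_bigr => t _; rewrite ffunE.
  rewrite (reindex_inj (@perm_inj _ s)); apply: eq_bigr => c _.
  by rewrite mem_imset_tperm /s tpermK.
rewrite /phi Asw card_imset; last exact: perm_inj.
by rewrite mem_imset_tperm /s tpermL.
Qed.

Lemma c_sum (r0 : 0 <= r) (r1 : r <= 1) :
  \sum_(k in Kset) \sum_(g : traj T C) fault_prob r g * phi Kset k g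
  = 1 - r ^+ #|Kset|.
Proof.
rewrite exchange_big /= -(@w_sum1 _ T C r) -(@w_empty _ T C r Kset) -sumrB.
apply: eq_bigr => g _; rewrite -mulr_sumr -[X in X - _]mulr1 -mulrBr; congr (_ * _).
rewrite (big_setID (active Kset g)) /= [X in _ + X]big1; last first.
  by move=> k; rewrite finset.in_setD => /andP [kA _]; rewrite /phi (negbTE kA) mul0r.
rewrite addr0 (finset.setIidPr _); last by apply/fintype.subsetP => k; rewrite inE => /andP [].
rewrite (eq_bigr (fun _ => (#|active Kset g|%:R)^-1)); last first.
  by move=> k kA; rewrite /phi kA mul1r.
rewrite sumr_const; case: eqP => [->|/eqP nz].
  by rewrite cards0 mulr0n subrr.
by rewrite subr0 -[LHS]mulr_natr mulVf // pnatr_eq0 cards_eq0.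
Qed.

End Sym.

Local Open Scope classical_set_scope.

Theorem proposition1 (d : measure_display) (Om : measurableType d) (R : realType)
  (P : probability Om R) (TX : Type) (X : Om -> TX) (n : nat) (Y : Om -> 'I_n)
  (Theta : Type) (theta : Theta) (C T : nat) (E : rel 'I_C) (Kset : {set 'I_C})
  (Psi : Theta -> 'I_C -> ('I_T.+1 -> graph C) -> TX -> {ffun 'I_n -> R})
  (loss : {ffun 'I_n -> R} -> 'I_n -> R) (r : R) :
  0 <= r <= 1 ->
  (forall p y, 0 <= loss p y) ->
  (forall y : 'I_n, measurable (Y @^-1` [set y])) ->
  (forall (k : 'I_C) (g : traj T C),
     measurable_fun setT (fun om => loss (Psi theta k (net_of E g) (X om)) (Y om))) ->
  measurable_fun setT (fun om => loss (marginal_Y P Y) (Y om)) ->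
  (forall (g : traj T C) (k : 'I_C), k \in active Kset g ->
     (agg_risk P X Y theta E Psi loss k (base_traj T C)
      <= agg_risk P X Y theta E Psi loss k g)%E) ->
  ((1 - r ^+ #|Kset|)%:E * dynamic_risk P X Y theta E Kset Psi loss (@base_prob R T C)
   + (r ^+ #|Kset|)%:E * \int[P]_om (loss (marginal_Y P Y) (Y om))%:E
   <= dynamic_risk P X Y theta E Kset Psi loss (fault_prob r))%E.
Proof.
move=> /andP[r0 r1] l0 mY mf mM Hle.
set M := (\int[P]_om (loss (marginal_Y P Y) (Y om))%:E)%E.
pose ar k g := agg_risk P X Y theta E Psi loss k g.
pose a k := ar k (base_traj T C).
have a0 k g : (0 <= ar k g)%E by apply: integral_ge0 => om _; rewrite lee_fin.
have M0 : (0 <= M)%E by apply: integral_ge0 => om _; rewrite lee_fin.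
pose I (g : traj T C) := (\int[P]_om (h_rand_loss loss (marginal_Y P Y)
   (fun k => Psi theta k (net_of E g)) (active Kset g) (X om) (Y om))%:E)%E.
have IE g : active Kset g == finset.set0 -> I g = M.
  by move=> H; rewrite /I /h_rand_loss H.
have IN g : active Kset g != finset.set0 ->
    I g = (((#|active Kset g|%:R)^-1)%:E * \sum_(k in active Kset g) ar k g)%E.
  move=> H; rewrite /I /h_rand_loss (negbTE H).
  under eq_integral => om _ do rewrite EFinM big_mkcond /=.
  rewrite ge0_integralZl //.
  - congr (_ * _)%E.
    under eq_integral => om _ do rewrite -sumEFin.
    rewrite ge0_integral_sum //.
    + rewrite [RHS]big_mkcond; apply: eq_bigr => k _; case: (k \in active Kset g) => //.
      exact: integral0.
    + move=> k; case: (k \in active Kset g); last exact: measurable_cst.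
      by apply/measurable_realfun.measurable_EFinP; exact: mf.
    + by move=> k x _; case: ifP; rewrite lee_fin.
  - apply/measurable_realfun.measurable_EFinP; apply: measurable_sum => k.
    by case: (k \in active Kset g) => //; exact: measurable_cst.
  - by move=> x _; rewrite lee_fin; apply: sumr_ge0 => k _; case: ifP.
have w0 (g : traj T C) : (0 <= (fault_prob r g)%:E)%E by rewrite lee_fin w_ge0.
have -> : dynamic_risk P X Y theta E Kset Psi loss (fault_prob r)
    = (\sum_(g : traj T C) (fault_prob r g)%:E * I g)%E by [].
have -> : dynamic_risk P X Y theta E Kset Psi loss (@base_prob R T C) = I (base_traj T C).
  rewrite /dynamic_risk (bigD1 (base_traj T C)) //= big1 => [|g /negbTE gb]; last first.
    by rewrite /base_prob gb mul0e.
  by rewrite /base_prob eqxx mulr1n mul1e adde0.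
have AB : active Kset (base_traj T C) = Kset.
  by apply/setP => c; rewrite !inE ffunE inE.
case: (boolP (Kset == finset.set0)) => [K0|K0].
  have Ae (g : traj T C) : active Kset g == finset.set0.
    by rewrite /active (eqP K0) finset.setI0.
  under eq_bigr => g _ do rewrite IE ?Ae //.
  rewrite IE ?Ae // -ge0_sume_distrl; last by move=> g _.
  by rewrite sumEFin w_sum1 (eqP K0) cards0 expr0 subrr mul0e add0e !mul1e.
rewrite IN ?AB //.
pose J (g : traj T C) := if active Kset g == finset.set0 then M
  else (((#|active Kset g|%:R)^-1)%:E * \sum_(k in active Kset g) a k)%E.
have IJ g : (J g <= I g)%E.
  rewrite /J; case: eqP => [A0|/eqP A0]; first by rewrite IE ?A0.
  rewrite IN //; apply: lee_wpmul2l; first by rewrite lee_fin invr_ge0 ler0n.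
  by apply: lee_sum => k kA; exact: Hle.
apply: (@le_trans _ _ (\sum_(g : traj T C) (fault_prob r g)%:E * J g)%E); last first.
  by apply: lee_sum => g _; apply: lee_wpmul2l; [exact: w0 | exact: IJ].
have JE g : ((fault_prob r g)%:E * J g = (fault_prob r g * (active Kset g == finset.set0)%:R)%:E * M
     + \sum_(k in Kset) (fault_prob r g * phi Kset k g)%:E * a k)%E.
  rewrite /J; case: eqP => [A0|/eqP A0].
    rewrite mulr1 big1 ?adde0 // => k _; rewrite /phi A0 finset.in_set0 mul0r mulr0 mul0e //.
  rewrite mulr0 mul0e add0e muleA -EFinM ge0_sume_distrr; last by move=> k _; exact: a0.
  rewrite [RHS](big_setID (active Kset g)) /= [X in _ = (_ + X)%E]big1 ?adde0; last first.
    by move=> k; rewrite finset.in_setD => /andP [kA _]; rewrite /phi (negbTE kA) mul0r mulr0 mul0e.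
  rewrite (finset.setIidPr _); last by apply/fintype.subsetP => k; rewrite inE => /andP [].
  by apply: eq_bigr => k kA; rewrite /phi kA mul1r.
rewrite (eq_bigr _ (fun g _ => JE g)).
rewrite [X in (_ <= X)%E]big_split [X in (_ <= X)%E]/=.
rewrite -ge0_sume_distrl; last first.
  by move=> g _; rewrite lee_fin mulr_ge0 ?w_ge0.
rewrite sumEFin w_empty exchange_big /=.
case/set0Pn: K0 => k0 k0K.
pose c0 := \sum_(g : traj T C) fault_prob r g * phi Kset k0 g.
have CE k : k \in Kset ->
    (\sum_(g : traj T C) (fault_prob r g * phi Kset k g)%:E * a k = c0%:E * a k)%E.
  move=> kK; rewrite -ge0_sume_distrl ?sumEFin ?(@c_sym _ T C r Kset k k0 kK k0K) //.
  by move=> g _; rewrite lee_fin mulr_ge0 ?w_ge0 // /phi divr_ge0 ?ler0n.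
rewrite (eq_bigr _ CE) -ge0_sume_distrr; last by move=> k _; exact: a0.
have cE : c0 = (1 - r ^+ #|Kset|) / #|Kset|%:R.
  rewrite -(@c_sum _ T C r Kset r0 r1) (eq_bigr (fun _ => c0)); last by move=> k kK; rewrite (@c_sym _ T C r Kset k k0 kK k0K).
  rewrite sumr_const -[_ *+ _]mulr_natr mulfK // pnatr_eq0 -lt0n card_gt0.
  by apply/set0Pn; exists k0.
by rewrite addeC muleA -EFinM cE.
Qed.
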